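(* Let $\mathcal{D}$ be a symmetric operator on a Hilbert space $\mathcal{H}$, and suppose there exists an adequate approximate identity for $\mathcal{D}$. Then $\mathcal{D}$ is essentially self-adjoint.
   Context: A sequential approximate identity on a Hilbert $B$-module $E$ (here $B=\mathbb{C}$, $E=\mathcal{H}$) is a sequence of self-adjoint operators $\phi_k\in\mathrm{End}_B(E)$, $k\in\mathbb{N}$, converging strongly to the identity on $E$. For a symmetric operator $\mathcal{D}$ on $E$, an adequate approximate identity for $\mathcal{D}$ is a sequential approximate identity $\{\phi_k\}$ such that $\phi_k\cdot\mathrm{Dom}\,\mathcal{D}^*\subset\mathrm{Dom}\,\bar{\mathcal{D}}$, $[\bar{\mathcal{D}},\phi_k]$ is bounded on $\mathrm{Dom}\,\mathcal{D}$ for all $k$, and $\sup_k\|\overline{[\bar{\mathcal{D}},\phi_k]}\|<\infty$. *)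

(* Defs.v *)
From Stdlib Require Import Reals.
Open Scope R_scope.

Record Cpx := mkC { re : R; im : R }.
Definition C0 : Cpx := mkC 0 0.
Definition C1 : Cpx := mkC 1 0.
Definition Cadd (a b : Cpx) : Cpx := mkC (re a + re b) (im a + im b).
Definition Cmul (a b : Cpx) : Cpx :=
  mkC (re a * re b - im a * im b) (re a * im b + im a * re b).
Definition Cconj (a : Cpx) : Cpx := mkC (re a) (- im a).

Record HilbertSpace := {
  carrier :> Type;
  hzero : carrier;
  hadd : carrier -> carrier -> carrier;
  hopp : carrier -> carrier;
  hscal : Cpx -> carrier -> carrier;
  hinner : carrier -> carrier -> Cpx;
  hadd_assoc : forall x y z, hadd x (hadd y z) = hadd (hadd x y) z;
  hadd_comm : forall x y, hadd x y = hadd y x;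
  hadd_0 : forall x, hadd x hzero = x;
  hadd_opp : forall x, hadd x (hopp x) = hzero;
  hscal_1 : forall x, hscal C1 x = x;
  hscal_mul : forall a b x, hscal (Cmul a b) x = hscal a (hscal b x);
  hscal_addl : forall a b x, hscal (Cadd a b) x = hadd (hscal a x) (hscal b x);
  hscal_addr : forall a x y, hscal a (hadd x y) = hadd (hscal a x) (hscal a y);
  hinner_addl : forall x y z, hinner (hadd x y) z = Cadd (hinner x z) (hinner y z);
  hinner_scall : forall a x y, hinner (hscal a x) y = Cmul a (hinner x y);
  hinner_conj : forall x y, hinner x y = Cconj (hinner y x);
  hinner_pos : forall x, 0 <= re (hinner x x);
  hinner_def : forall x, hinner x x = C0 -> x = hzero;
  hcomplete : forall u : nat -> carrier,
    (forall eps, eps > 0 -> exists N, forall n m, (n >= N)%nat -> (m >= N)%nat ->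
        sqrt (re (hinner (hadd (u n) (hopp (u m))) (hadd (u n) (hopp (u m))))) < eps) ->
    exists l, forall eps, eps > 0 -> exists N, forall n, (n >= N)%nat ->
        sqrt (re (hinner (hadd (u n) (hopp l)) (hadd (u n) (hopp l)))) < eps
}.

Arguments hzero {h}.
Arguments hadd {h}.
Arguments hopp {h}.
Arguments hscal {h}.
Arguments hinner {h}.

Section Ops.
Context {H : HilbertSpace}.

Definition hsub (x y : H) : H := hadd x (hopp y).
Definition hnorm (x : H) : R := sqrt (re (hinner x x)).

Definition hconv (u : nat -> H) (l : H) : Prop :=
  Un_cv (fun n => hnorm (hsub (u n) l)) 0.

(** (Possibly unbounded) operators are represented by their graphs. *)
Definition graph := H -> H -> Prop.

Definition dom (G : graph) (x : H) : Prop := exists y, G x y.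

Definition is_operator (G : graph) : Prop :=
  G hzero hzero /\
  (forall x w y z, G x w -> G y z -> G (hadd x y) (hadd w z)) /\
  (forall a x w, G x w -> G (hscal a x) (hscal a w)) /\
  (forall x y1 y2, G x y1 -> G x y2 -> y1 = y2).

Definition densely_defined (G : graph) : Prop :=
  forall x : H, exists u : nat -> H, (forall n, dom G (u n)) /\ hconv u x.

Definition symmetric_op (G : graph) : Prop :=
  is_operator G /\ densely_defined G /\
  forall x w y z, G x w -> G y z -> hinner w y = hinner x z.

Definition adjoint (G : graph) : graph :=
  fun y z => forall x w, G x w -> hinner w y = hinner x z.

Definition closure (G : graph) : graph :=
  fun x y => exists (u v : nat -> H),
    (forall n, G (u n) (v n)) /\ hconv u x /\ hconv v y.

Definition self_adjoint (G : graph) : Prop :=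
  is_operator G /\ densely_defined G /\ forall y z, G y z <-> adjoint G y z.

Definition essentially_self_adjoint (G : graph) : Prop :=
  self_adjoint (closure G).

Definition bounded_selfadjoint (phi : H -> H) : Prop :=
  (forall x y, phi (hadd x y) = hadd (phi x) (phi y)) /\
  (forall a x, phi (hscal a x) = hscal a (phi x)) /\
  (exists c, forall x, hnorm (phi x) <= c * hnorm x) /\
  (forall x y, hinner (phi x) y = hinner x (phi y)).

Definition seq_approx_identity (phi : nat -> H -> H) : Prop :=
  (forall k, bounded_selfadjoint (phi k)) /\
  (forall x, hconv (fun k => phi k x) x).

(** Adequate approximate identity for D (graph G).  The commutator
    [Dbar, phi_k] on Dom D sends x (with D x = w) to Dbar(phi_k x) - phi_k w. *)
Definition adequate_approx_identity (G : graph) (phi : nat -> H -> H) : Prop :=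
  seq_approx_identity phi /\
  (forall k y, dom (adjoint G) y -> dom (closure G) (phi k y)) /\
  (forall k, exists Ck, forall x w v, G x w -> closure G (phi k x) v ->
       hnorm (hsub v (phi k w)) <= Ck * hnorm x) /\
  (exists M, forall k x w v, G x w -> closure G (phi k x) v ->
       hnorm (hsub v (phi k w)) <= M * hnorm x).

End Ops.

(* Main.v *)
Require Import Defs.
From Stdlib Require Import Reals Lra Psatz ClassicalEpsilon Classical ZArith Lia.
Open Scope R_scope.

Lemma Ceq (a b : Cpx) : re a = re b -> im a = im b -> a = b.
Proof. destruct a, b; simpl; intros; subst; reflexivity. Qed.

Definition rc (r : R) : Cpx := mkC r 0.

Section Alg.
Context {H : HilbertSpace}.
Implicit Types x y z u v : H.

Lemma hadd_0l x : hadd hzero x = x.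
Proof. rewrite hadd_comm; apply hadd_0. Qed.

Lemma hadd_cancel_r x y z : hadd x z = hadd y z -> x = y.
Proof.
  intro E. assert (E2: hadd (hadd x z) (hopp z) = hadd (hadd y z) (hopp z)) by (rewrite E; reflexivity).
  rewrite <- !hadd_assoc, hadd_opp, !hadd_0 in E2. exact E2.
Qed.

Lemma hscal_0 x : hscal C0 x = hzero.
Proof.
  apply (hadd_cancel_r _ _ (hscal C0 x)). rewrite hadd_0l, <- hscal_addl.
  f_equal. apply Ceq; simpl; ring.
Qed.

Lemma hopp_unique x y : hadd x y = hzero -> y = hopp x.
Proof.
  intro E. apply (hadd_cancel_r _ _ x). rewrite (hadd_comm _ (hopp x)), hadd_opp, hadd_comm. exact E.
Qed.

Lemma hscal_m1 x : hscal (rc (-1)) x = hopp x.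
Proof.
  apply hopp_unique. rewrite <- (hscal_1 _ x) at 1. rewrite <- hscal_addl.
  rewrite <- (hscal_0 x). f_equal. apply Ceq; simpl; ring.
Qed.

Lemma hopp_hopp x : hopp (hopp x) = x.
Proof. symmetry. apply hopp_unique. rewrite hadd_comm. apply hadd_opp. Qed.

Lemma hopp_add x y : hopp (hadd x y) = hadd (hopp x) (hopp y).
Proof. rewrite <- !hscal_m1. apply hscal_addr. Qed.

Lemma hscal_opp a x : hscal a (hopp x) = hopp (hscal a x).
Proof.
  rewrite <- !hscal_m1, <- !hscal_mul. f_equal. apply Ceq; simpl; ring.
Qed.

Lemma hsub_add (a b c d : H) : hsub (hadd a b) (hadd c d) = hadd (hsub a c) (hsub b d).
Proof.
  unfold hsub. rewrite hopp_add. rewrite !hadd_assoc. f_equal.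
  rewrite <- !hadd_assoc. f_equal. apply hadd_comm.
Qed.

Lemma hsub_scal a x y : hsub (hscal a x) (hscal a y) = hscal a (hsub x y).
Proof. unfold hsub. rewrite hscal_addr, hscal_opp. reflexivity. Qed.

Lemma hsub_diag x : hsub x x = hzero.
Proof. apply hadd_opp. Qed.

Lemma hsub_eq0 x y : hsub x y = hzero -> x = y.
Proof.
  unfold hsub; intro E. apply hopp_unique in E. rewrite <- (hopp_hopp y), E, hopp_hopp. reflexivity.
Qed.

Lemma hscal_rc_mul r s x : hscal (rc r) (hscal (rc s) x) = hscal (rc (r*s)) x.
Proof. rewrite <- hscal_mul. f_equal. apply Ceq; simpl; ring. Qed.

Lemma hscal_rc_add r s x : hscal (rc (r+s)) x = hadd (hscal (rc r) x) (hscal (rc s) x).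
Proof. rewrite <- hscal_addl. f_equal. apply Ceq; simpl; ring. Qed.

Lemma hscal_rc1 x : hscal (rc 1) x = x.
Proof. apply hscal_1. Qed.

Lemma re_conj x y : re (hinner x y) = re (hinner y x).
Proof. rewrite (hinner_conj _ x y). reflexivity. Qed.

Lemma im_conj x y : im (hinner x y) = - im (hinner y x).
Proof. rewrite (hinner_conj _ x y). reflexivity. Qed.

Lemma im_self x : im (hinner x x) = 0.
Proof. pose proof (im_conj x x). lra. Qed.

Lemma re_addl x y z : re (hinner (hadd x y) z) = re (hinner x z) + re (hinner y z).
Proof. rewrite hinner_addl. reflexivity. Qed.

Lemma im_addl x y z : im (hinner (hadd x y) z) = im (hinner x z) + im (hinner y z).
Proof. rewrite hinner_addl. reflexivity. Qed.

Lemma re_addr x y z : re (hinner z (hadd x y)) = re (hinner z x) + re (hinner z y).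
Proof. rewrite !(re_conj z). apply re_addl. Qed.

Lemma im_addr x y z : im (hinner z (hadd x y)) = im (hinner z x) + im (hinner z y).
Proof. rewrite !(im_conj z). rewrite im_addl. ring. Qed.

Lemma re_scall a x y : re (hinner (hscal a x) y) = re a * re (hinner x y) - im a * im (hinner x y).
Proof. rewrite hinner_scall. reflexivity. Qed.

Lemma im_scall a x y : im (hinner (hscal a x) y) = re a * im (hinner x y) + im a * re (hinner x y).
Proof. rewrite hinner_scall. reflexivity. Qed.

Lemma re_oppl x y : re (hinner (hopp x) y) = - re (hinner x y).
Proof. rewrite <- hscal_m1, re_scall. simpl. ring. Qed.

Lemma re_oppr x y : re (hinner y (hopp x)) = - re (hinner y x).
Proof. rewrite !(re_conj y). apply re_oppl. Qed.

Lemma re_subl x y z : re (hinner (hsub x y) z) = re (hinner x z) - re (hinner y z).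
Proof. unfold hsub. rewrite re_addl, re_oppl. ring. Qed.

Lemma re_subr x y z : re (hinner z (hsub x y)) = re (hinner z x) - re (hinner z y).
Proof. unfold hsub. rewrite re_addr, re_oppr. ring. Qed.

Lemma im_as_re x y : im (hinner x y) = - re (hinner (hscal (mkC 0 1) x) y).
Proof. rewrite re_scall. simpl. ring. Qed.

Lemma re_scal_rc r x y : re (hinner (hscal (rc r) x) y) = r * re (hinner x y).
Proof. rewrite re_scall. simpl. ring. Qed.

Definition nsq x := re (hinner x x).

Lemma nsq_pos x : 0 <= nsq x.
Proof. apply hinner_pos. Qed.

Lemma hnorm_sq x : hnorm x * hnorm x = nsq x.
Proof. unfold hnorm. apply sqrt_sqrt, nsq_pos. Qed.

Lemma hnorm_pos x : 0 <= hnorm x.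
Proof. apply sqrt_pos. Qed.

Lemma nsq_add x y : nsq (hadd x y) = nsq x + nsq y + 2 * re (hinner x y).
Proof. unfold nsq. rewrite re_addl, !re_addr, (re_conj y x). ring. Qed.

Lemma nsq_scal a x : nsq (hscal a x) = (re a * re a + im a * im a) * nsq x.
Proof.
  unfold nsq. rewrite re_scall. rewrite (hinner_conj _ x (hscal a x)). simpl.
  rewrite re_scall, im_scall, im_self. ring.
Qed.

Lemma CS_sq x y : re (hinner x y) * re (hinner x y) <= nsq x * nsq y.
Proof.
  assert (Q: forall t, 0 <= nsq x + 2 * t * re (hinner x y) + t * t * nsq y).
  { intro t. pose proof (nsq_pos (hadd x (hscal (rc t) y))) as P.
    rewrite nsq_add, nsq_scal, (re_conj x), re_scal_rc, (re_conj y x) in P. simpl in P. lra. }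
  pose proof (nsq_pos x). pose proof (nsq_pos y).
  set (a := nsq y) in *. set (b := re (hinner x y)) in *. set (c := nsq x) in *.
  destruct (Req_dec a 0) as [A|A].
  - destruct (Req_dec b 0) as [B|B].
    + rewrite B, A. lra.
    + specialize (Q (- (c + 1) / (2 * b))). rewrite A in Q.
      assert (E: 2 * (- (c + 1) / (2 * b)) * b = - (c+1)) by (field; exact B).
      rewrite E in Q. lra.
  - specialize (Q (- b / a)). assert (0 < a) by lra.
    assert (E: c + 2 * (- b / a) * b + - b / a * (- b / a) * a = (c * a - b * b) / a) by (field; lra).
    rewrite E in Q.
    apply Rmult_le_compat_r with (r := a) in Q; [|lra].
    unfold Rdiv in Q. rewrite Rmult_assoc, Rinv_l in Q; lra.
Qed.

Lemma CS x y : Rabs (re (hinner x y)) <= hnorm x * hnorm y.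
Proof.
  pose proof (CS_sq x y). pose proof (hnorm_pos x). pose proof (hnorm_pos y).
  rewrite <- !hnorm_sq in H0.
  assert (0 <= hnorm x * hnorm y) by nra.
  destruct (Rcase_abs (re (hinner x y))) as [L|L];
    [rewrite Rabs_left by lra | rewrite Rabs_right by lra]; nra.
Qed.

Lemma tri x y : hnorm (hadd x y) <= hnorm x + hnorm y.
Proof.
  pose proof (CS x y). pose proof (hnorm_pos x). pose proof (hnorm_pos y).
  pose proof (hnorm_pos (hadd x y)).
  assert (hnorm (hadd x y) * hnorm (hadd x y) <= (hnorm x + hnorm y) * (hnorm x + hnorm y)).
  { rewrite hnorm_sq, nsq_add, <- !hnorm_sq.
    pose proof (Rle_abs (re (hinner x y))). nra. }
  nra.
Qed.

Lemma hnorm_scal a x : hnorm (hscal a x) = sqrt (re a * re a + im a * im a) * hnorm x.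
Proof. unfold hnorm. fold (nsq (hscal a x)). rewrite nsq_scal, sqrt_mult; try nra; try apply nsq_pos. reflexivity. Qed.

Lemma hnorm_opp x : hnorm (hopp x) = hnorm x.
Proof. rewrite <- hscal_m1, hnorm_scal. simpl. replace (-1 * -1 + 0 * 0) with 1 by ring. rewrite sqrt_1. ring. Qed.

Lemma hnorm_sub_sym x y : hnorm (hsub x y) = hnorm (hsub y x).
Proof.
  rewrite <- hnorm_opp. f_equal. unfold hsub. rewrite hopp_add, hopp_hopp. apply hadd_comm.
Qed.

Lemma tri_sub x y z : hnorm (hsub x z) <= hnorm (hsub x y) + hnorm (hsub y z).
Proof.
  replace (hsub x z) with (hadd (hsub x y) (hsub y z)). apply tri.
  unfold hsub. rewrite <- hadd_assoc. f_equal. rewrite hadd_assoc, (hadd_comm _ (hopp y)), hadd_opp, hadd_0l. reflexivity.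
Qed.

Lemma hnorm_le_sub x y : hnorm x <= hnorm y + hnorm (hsub x y).
Proof.
  replace x with (hadd y (hsub x y)) at 1. apply tri.
  unfold hsub. rewrite hadd_comm, <- hadd_assoc, (hadd_comm _ (hopp y)), hadd_opp, hadd_0. reflexivity.
Qed.

Lemma nsq0_zero x : nsq x = 0 -> x = hzero.
Proof. intro E. apply hinner_def. apply Ceq; [exact E| apply im_self]. Qed.

Lemma hnorm0 : hnorm (@hzero H) = 0.
Proof. rewrite <- (hscal_0 hzero), hnorm_scal. simpl. replace (0*0+0*0) with 0 by ring. rewrite sqrt_0. ring. Qed.

End Alg.

Section Conv.
Context {H : HilbertSpace}.
Implicit Types x y z : H.

Lemma hconv_iff (u : nat -> H) l : hconv u l <-> forall eps, eps > 0 -> exists N, forall n, (n>=N)%nat -> hnorm (hsub (u n) l) < eps.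
Proof.
  unfold hconv, Un_cv, R_dist. split; intros C eps E; destruct (C eps E) as [N HN]; exists N; intros n Hn;
  specialize (HN n Hn); pose proof (hnorm_pos (hsub (u n) l));
  rewrite Rminus_0_r, Rabs_right in * by lra; lra.
Qed.

Lemma hconv_const x : hconv (fun _ => x) x.
Proof. apply hconv_iff. intros eps E. exists O. intros. rewrite hsub_diag, hnorm0. lra. Qed.

Lemma hconv_add (u v : nat -> H) x y : hconv u x -> hconv v y -> hconv (fun n => hadd (u n) (v n)) (hadd x y).
Proof.
  rewrite !hconv_iff. intros Cu Cv eps E.
  destruct (Cu (eps/2)) as [N1 H1]; [lra|]. destruct (Cv (eps/2)) as [N2 H2]; [lra|].
  exists (max N1 N2). intros n Hn. rewrite hsub_add.
  pose proof (tri (hsub (u n) x) (hsub (v n) y)).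
  specialize (H1 n ltac:(lia)). specialize (H2 n ltac:(lia)). lra.
Qed.

Lemma hconv_scal a (u : nat -> H) x : hconv u x -> hconv (fun n => hscal a (u n)) (hscal a x).
Proof.
  rewrite !hconv_iff. intros Cu eps E.
  set (c := sqrt (re a * re a + im a * im a)).
  assert (0 <= c) by apply sqrt_pos.
  destruct (Cu (eps / (c+1))) as [N1 H1]. { apply Rdiv_lt_0_compat; lra. }
  exists N1. intros n Hn. rewrite hsub_scal, hnorm_scal. fold c.
  specialize (H1 n Hn). pose proof (hnorm_pos (hsub (u n) x)).
  apply Rle_lt_trans with ((c+1) * hnorm (hsub (u n) x)). nra.
  apply Rmult_lt_compat_l with (r := c+1) in H1; [|lra].
  replace ((c + 1) * (eps / (c + 1))) with eps in H1 by (field; lra). lra.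
Qed.

Lemma re_cont (u v : nat -> H) x y : hconv u x -> hconv v y ->
  Un_cv (fun n => re (hinner (u n) (v n))) (re (hinner x y)).
Proof.
  rewrite !hconv_iff. intros Cu Cv eps E. unfold R_dist.
  set (K := hnorm x + hnorm y + 2). pose proof (hnorm_pos x) as Px. pose proof (hnorm_pos y) as Py.
  set (d := Rmin 1 (eps / K)).
  assert (Kp: 0 < K) by (unfold K; lra).
  assert (dp: 0 < d) by (apply Rmin_glb_lt; [lra| apply Rdiv_lt_0_compat; lra]).
  assert (d1: d <= 1) by apply Rmin_l. assert (d2: d * K <= eps).
  { assert (Q: d <= eps / K) by apply Rmin_r. apply Rmult_le_compat_r with (r := K) in Q; [|lra].
    unfold Rdiv in Q. rewrite Rmult_assoc, Rinv_l in Q; lra. }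
  destruct (Cu (d/2)) as [N1 H1]; [lra|]. destruct (Cv (d/2)) as [N2 H2]; [lra|].
  exists (max N1 N2). intros n Hn.
  specialize (H1 n ltac:(lia)). specialize (H2 n ltac:(lia)).
  assert (Eq: re (hinner (u n) (v n)) - re (hinner x y) =
     re (hinner (hsub (u n) x) (v n)) + re (hinner x (hsub (v n) y))).
  { rewrite re_subl, re_subr. ring. }
  rewrite Eq.
  pose proof (CS (hsub (u n) x) (v n)). pose proof (CS x (hsub (v n) y)).
  pose proof (hnorm_le_sub (v n) y).
  pose proof (hnorm_pos (hsub (u n) x)). pose proof (hnorm_pos (hsub (v n) y)).
  pose proof (hnorm_pos (v n)).
  eapply Rle_lt_trans. apply Rabs_triang.
  assert (hnorm (hsub (u n) x) * hnorm (v n) <= d/2 * (hnorm y + 1)) by nra.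
  assert (hnorm x * hnorm (hsub (v n) y) <= hnorm x * (d/2)) by nra.
  unfold K in d2. nra.
Qed.

Lemma inner_lim_eq (a b c d : nat -> H) x y x' y' :
  hconv a x -> hconv b y -> hconv c x' -> hconv d y' ->
  (forall n, hinner (a n) (b n) = hinner (c n) (d n)) -> hinner x y = hinner x' y'.
Proof.
  intros Ca Cb Cc Cd E. apply Ceq.
  - eapply UL_sequence. apply (re_cont _ _ _ _ Ca Cb).
    eapply Un_cv_ext; [| apply (re_cont _ _ _ _ Cc Cd)]. intro n. simpl. rewrite E. reflexivity.
  - rewrite !im_as_re. f_equal. eapply UL_sequence.
    apply (re_cont _ _ _ _ (hconv_scal (mkC 0 1) _ _ Ca) Cb).
    eapply Un_cv_ext; [| apply (re_cont _ _ _ _ (hconv_scal (mkC 0 1) _ _ Cc) Cd)].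
    intro n. simpl. rewrite !hinner_scall, E. reflexivity.
Qed.

Lemma conv_bounded (u : nat -> H) x : hconv u x -> exists B, forall n, hnorm (u n) <= B.
Proof.
  rewrite hconv_iff. intro C. destruct (C 1) as [N HN]; [lra|].
  assert (F: forall M, exists B, forall n, (n < M)%nat -> hnorm (u n) <= B).
  { induction M as [|M [B HB]]. exists 0. intros; lia.
    exists (Rmax B (hnorm (u M))). intros n Hn.
    destruct (Nat.eq_dec n M). subst. apply Rmax_r.
    eapply Rle_trans; [apply HB; lia| apply Rmax_l]. }
  destruct (F N) as [B HB]. exists (Rmax B (hnorm x + 1)). intro n.
  destruct (Nat.lt_ge_cases n N).
  - eapply Rle_trans; [apply HB; lia| apply Rmax_l].
  - eapply Rle_trans; [| apply Rmax_r]. pose proof (hnorm_le_sub (u n) x). specialize (HN n H0). lra.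
Qed.

Lemma dense_bound (D : @graph H) : densely_defined D -> forall v K, 0 <= K ->
  (forall x, dom D x -> Rabs (re (hinner x v)) <= K * hnorm x) -> hnorm v <= K.
Proof.
  intros Dd v K K0 HB. destruct (Dd v) as [xs [Dx Cx]]. rewrite hconv_iff in Cx.
  pose proof (hnorm_pos v) as P.
  assert (L: nsq v <= K * hnorm v).
  { apply Rnot_lt_le. intro G. set (g := nsq v - K * hnorm v).
    destruct (Cx (g / (K + hnorm v + 1))) as [N HN]. { apply Rdiv_lt_0_compat; unfold g; lra. }
    specialize (HN N (le_n _)). specialize (HB (xs N) (Dx N)).
    set (dl := hnorm (hsub (xs N) v)) in *. pose proof (hnorm_pos (hsub (xs N) v)) as Pd.
    assert (Q1: dl * (K + hnorm v + 1) < g).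
    { apply Rmult_lt_compat_r with (r := K + hnorm v + 1) in HN; [|lra].
      replace (g / (K + hnorm v + 1) * (K + hnorm v + 1)) with g in HN by (field; lra). exact HN. }
    assert (Eq: nsq v = re (hinner (xs N) v) - re (hinner (hsub (xs N) v) v)).
    { unfold nsq. rewrite re_subl. ring. }
    pose proof (CS (hsub (xs N) v) v) as Q2. pose proof (hnorm_le_sub (xs N) v) as Q3.
    pose proof (Rle_abs (re (hinner (xs N) v))) as Q4.
    pose proof (Rle_abs (- re (hinner (hsub (xs N) v) v))) as Q5. rewrite Rabs_Ropp in Q5.
    change (hnorm (hsub (xs N) v)) with dl in Q2, Q3.
    assert (Q6: K * hnorm (xs N) <= K * (hnorm v + dl)) by nra.
    assert (Q7: dl * hnorm v <= dl * (K + hnorm v + 1)) by nra.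
    assert (Q8: K * dl <= dl * (K + hnorm v + 1)) by nra.
    unfold g in Q1. rewrite Rmult_plus_distr_l in Q6. rewrite !Rmult_plus_distr_l in Q1, Q7, Q8. assert (0 <= dl) by exact Pd. lra. }
  rewrite <- hnorm_sq in L. destruct (Req_dec (hnorm v) 0). lra. nra.
Qed.

Lemma weak_ext (D : @graph H) (a : nat -> H) B : densely_defined D ->
  (forall k, hnorm (a k) <= B) ->
  (forall x, dom D x -> Un_cv (fun k => re (hinner x (a k))) 0) ->
  forall h, Un_cv (fun k => re (hinner h (a k))) 0.
Proof.
  intros Dd HB W h eps E. unfold R_dist.
  assert (B0: 0 <= B) by (pose proof (HB O); pose proof (hnorm_pos (a O)); lra).
  destruct (Dd h) as [xs [Dx Cx]]. rewrite hconv_iff in Cx.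
  destruct (Cx (eps / 2 / (B+1))) as [N HN]. { apply Rdiv_lt_0_compat; lra. }
  specialize (HN N (le_n _)).
  destruct (W (xs N) (Dx N) (eps/2)) as [M HM]; [lra|].
  exists M. intros k Hk. specialize (HM k Hk). unfold R_dist in HM. rewrite Rminus_0_r in *.
  assert (Eq: re (hinner h (a k)) = re (hinner (xs N) (a k)) - re (hinner (hsub (xs N) h) (a k))).
  { rewrite re_subl. ring. }
  rewrite Eq. eapply Rle_lt_trans. apply Rabs_triang. rewrite Rabs_Ropp.
  pose proof (CS (hsub (xs N) h) (a k)). specialize (HB k).
  pose proof (hnorm_pos (hsub (xs N) h)). pose proof (hnorm_pos (a k)).
  assert (hnorm (hsub (xs N) h) * (B+1) < eps/2).
  { apply Rmult_lt_compat_r with (r := B+1) in HN; [|lra].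
    replace (eps / 2 / (B + 1) * (B + 1)) with (eps/2) in HN by (field; lra). exact HN. }
  nra.
Qed.

End Conv.

Section Op.
Context {H : HilbertSpace}.
Implicit Types x y z : H.

Lemma inner_swap x y x' y' : hinner x y = hinner x' y' -> hinner y x = hinner y' x'.
Proof. intro E. rewrite (hinner_conj _ y x), (hinner_conj _ y' x'), E. reflexivity. Qed.

Lemma sym_adj (D : @graph H) x w : symmetric_op D -> D x w -> adjoint D x w.
Proof. intros [_ [_ S]] Dxw x' w' D'. apply (S x' w' x w D' Dxw). Qed.

Lemma adj_closure (D : @graph H) y z a b : adjoint D y z -> closure D a b -> hinner b y = hinner a z.
Proof.
  intros A [u [v [Duv [Cu Cv]]]].
  apply (inner_lim_eq v (fun _ => y) u (fun _ => z)); auto using hconv_const.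
Qed.

Lemma closure_incl (D : @graph H) x w : D x w -> closure D x w.
Proof. intro E. exists (fun _ => x), (fun _ => w). auto using hconv_const. Qed.

Lemma closure_adj (D : @graph H) y z : symmetric_op D -> closure D y z -> adjoint D y z.
Proof.
  intros S Cl x' w' D'. apply inner_swap. symmetry. apply (adj_closure D x' w' y z); auto.
  apply sym_adj; auto.
Qed.

Lemma closure_op (D : @graph H) : symmetric_op D -> is_operator (closure D).
Proof.
  intros S. pose proof S as [[D0 [Dadd [Dsc _]]] [Dd Sy]].
  split; [|split; [|split]].
  - apply closure_incl, D0.
  - intros x w y z [u1 [v1 [D1 [C1 C1']]]] [u2 [v2 [D2 [C2 C2']]]].
    exists (fun n => hadd (u1 n) (u2 n)), (fun n => hadd (v1 n) (v2 n)).
    split; [intro; apply Dadd; auto| split; apply hconv_add; auto].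
  - intros a x w [u1 [v1 [D1 [C1 C1']]]].
    exists (fun n => hscal a (u1 n)), (fun n => hscal a (v1 n)).
    split; [intro; apply Dsc; auto| split; apply hconv_scal; auto].
  - intros x y1 y2 E1 E2.
    assert (Z: forall x' , dom D x' -> Rabs (re (hinner x' (hsub y1 y2))) <= 0 * hnorm x').
    { intros x' [w' D']. pose proof (sym_adj D x' w' S D') as A.
      pose proof (adj_closure D x' w' x y1 A E1) as e1.
      pose proof (adj_closure D x' w' x y2 A E2) as e2.
      rewrite re_subr, (re_conj x' y1), (re_conj x' y2), e1, e2.
      rewrite Rminus_diag, Rabs_R0. lra. }
    pose proof (dense_bound D Dd _ 0 (Rle_refl 0) Z) as B.
    apply hsub_eq0. apply nsq0_zero. rewrite <- hnorm_sq.
    pose proof (hnorm_pos (hsub y1 y2)). assert (hnorm (hsub y1 y2) = 0) by lra.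
    rewrite H1. ring.
Qed.

Lemma closure_dense (D : @graph H) : densely_defined D -> densely_defined (closure D).
Proof.
  intros Dd x. destruct (Dd x) as [u [Du Cu]]. exists u. split; auto.
  intro n. destruct (Du n) as [w Dw]. exists w. apply closure_incl, Dw.
Qed.

End Op.

Lemma inv_small eps : eps > 0 -> exists N, forall n, (n >= N)%nat -> / INR (S n) < eps.
Proof.
  intro E. destruct (archimed (/ eps)) as [A _].
  assert (P: 0 < / eps) by (apply Rinv_0_lt_compat; lra).
  exists (Z.to_nat (up (/ eps))). intros n Hn.
  assert (U: (0 <= up (/eps))%Z). { apply le_IZR. lra. }
  assert (I: IZR (up (/eps)) <= INR n).
  { rewrite <- (Z2Nat.id _ U), <- INR_IZR_INZ. apply le_INR. exact Hn. }
  rewrite S_INR. assert (Q: / eps < INR n + 1) by lra.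
  apply Rinv_lt_contravar in Q; [| apply Rmult_lt_0_compat; lra].
  rewrite Rinv_inv in Q. exact Q.
Qed.

Section Avg.
Context {H : HilbertSpace}.

Lemma avg_bound (c Sx : nat -> H) B : Sx O = hzero -> (forall n, Sx (S n) = hadd (Sx n) (c n)) ->
  (forall n, hnorm (c n) <= B) -> (forall n, Rabs (re (hinner (Sx n) (c n))) <= 1) ->
  forall n, nsq (Sx n) <= INR n * (B*B + 2).
Proof.
  intros S0 SS HB HI n. induction n as [|n IH].
  - rewrite S0. unfold nsq. rewrite <- (hscal_0 hzero), re_scall. simpl. lra.
  - rewrite SS, nsq_add, S_INR. rewrite <- (hnorm_sq (c n)).
    pose proof (HB n). pose proof (hnorm_pos (c n)).
    pose proof (Rle_abs (re (hinner (Sx n) (c n)))). specialize (HI n).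
    assert (hnorm (c n) * hnorm (c n) <= B * B) by nra. lra.
Qed.

Lemma avg_conv (P : nat -> H) (y : H) C : 0 <= C ->
  (forall n, nsq (hsub (P n) (hscal (rc (INR n)) y)) <= INR n * C) ->
  hconv (fun n => hscal (rc (/ INR (S n))) (P (S n))) y.
Proof.
  intros C0 HB. apply hconv_iff. intros eps E.
  destruct (inv_small (eps * eps / (C + 1))) as [N HN].
  { apply Rdiv_lt_0_compat; nra. }
  exists N. intros n Hn. specialize (HN n Hn).
  set (m := INR (S n)) in *. assert (mp: 0 < m) by (apply lt_0_INR; lia).
  assert (Eq: hsub (hscal (rc (/ m)) (P (S n))) y = hscal (rc (/ m)) (hsub (P (S n)) (hscal (rc m) y))).
  { rewrite <- hsub_scal, hscal_rc_mul, Rinv_l by lra. rewrite hscal_rc1. reflexivity. }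
  rewrite Eq. specialize (HB (S n)). fold m in HB.
  assert (L: nsq (hscal (rc (/ m)) (hsub (P (S n)) (hscal (rc m) y))) < eps * eps).
  { rewrite nsq_scal. simpl.
    set (s := nsq (hsub (P (S n)) (hscal (rc m) y))) in *.
    assert (I: 0 < / m) by (apply Rinv_0_lt_compat; lra).
    replace (/ m * / m + 0 * 0) with (/ m * / m) by ring.
    assert (/ m * / m * s <= / m * C).
    { replace (/ m * C) with (/ m * / m * (m * C)) by (field; lra).
      apply Rmult_le_compat_l; nra. }
    assert (/ m * (C+1) < eps * eps).
    { apply Rmult_lt_compat_r with (r := C+1) in HN; [|lra].
      replace (eps * eps / (C + 1) * (C + 1)) with (eps*eps) in HN by (field; lra). exact HN. }
    nra. }
  rewrite <- hnorm_sq in L. pose proof (hnorm_pos (hscal (rc (/ m)) (hsub (P (S n)) (hscal (rc m) y)))).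
  nra.
Qed.

End Avg.

Section Main.
Context {H : HilbertSpace}.

Lemma main_incl (D : @graph H) phi y z : symmetric_op D -> adequate_approx_identity D phi ->
  adjoint D y z -> closure D y z.
Proof.
  intros Sd [[Hbsa Hconv] [Hdom [_ [M HM]]]] Ayz.
  pose proof Sd as [[D0 [Dadd [Dsc Dfun]]] [Dd Sy]].
  destruct (conv_bounded _ _ (Hconv z)) as [Bz HBz].
  set (K := Rabs Bz + Rabs M * hnorm y).
  assert (K0: 0 <= K).
  { unfold K. pose proof (Rabs_pos Bz). pose proof (Rabs_pos M). pose proof (hnorm_pos y). nra. }
  assert (Vb: forall k v, closure D (phi k y) v -> hnorm v <= K).
  { intros k v Cv. apply (dense_bound D Dd _ _ K0). intros x [w Dxw].
    pose proof (sym_adj D x w Sd Dxw) as Axw.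
    destruct (Hdom k x (ex_intro _ w Axw)) as [v' Cv'].
    specialize (HM k x w v' Dxw Cv').
    pose proof (adj_closure D x w _ _ Axw Cv) as e1.
    pose proof (adj_closure D y z _ _ Ayz Cv') as e2.
    destruct (Hbsa k) as [_ [_ [_ SA]]].
    assert (Eq: re (hinner x v) = re (hinner x (phi k z)) - re (hinner (hsub v' (phi k w)) y)).
    { assert (f1: re (hinner x v) = re (hinner (phi k w) y)).
      { rewrite (re_conj x v), e1, SA, (re_conj y). reflexivity. }
      assert (f2: re (hinner v' y) = re (hinner x (phi k z))).
      { rewrite e2, SA. reflexivity. }
      rewrite re_subl, f1, f2. ring. }
    rewrite Eq. eapply Rle_trans. apply Rabs_triang. rewrite Rabs_Ropp.
    pose proof (CS x (phi k z)) as c1. pose proof (CS (hsub v' (phi k w)) y) as c2.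
    specialize (HBz k). pose proof (hnorm_pos x). pose proof (hnorm_pos y).
    pose proof (hnorm_pos (phi k z)). pose proof (Rle_abs Bz). pose proof (Rle_abs M).
    assert (hnorm (hsub v' (phi k w)) <= Rabs M * hnorm x) by nra.
    unfold K. nra. }
  assert (Ch: forall k, exists pq : H * H, D (fst pq) (snd pq) /\
     hnorm (hsub (fst pq) (phi k y)) < / INR (S k) /\ hnorm (snd pq) <= K + 1).
  { intro k. destruct (Hdom k y (ex_intro _ z Ayz)) as [v Cv].
    pose proof (Vb k v Cv) as Bv.
    destruct Cv as [u [vv [Duv [Cu Cvv]]]]. rewrite hconv_iff in Cu, Cvv.
    destruct (Cu (/ INR (S k))) as [N1 H1]. { apply Rinv_0_lt_compat, lt_0_INR; lia. }
    destruct (Cvv 1) as [N2 H2]; [lra|].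
    exists (u (max N1 N2), vv (max N1 N2)). simpl. split; [apply Duv|]. split.
    - apply H1; lia.
    - pose proof (hnorm_le_sub (vv (max N1 N2)) v). specialize (H2 (max N1 N2) ltac:(lia)). lra. }
  assert (Ch2: {pq : nat -> H * H | forall k, D (fst (pq k)) (snd (pq k)) /\
     hnorm (hsub (fst (pq k)) (phi k y)) < / INR (S k) /\ hnorm (snd (pq k)) <= K + 1}).
  { exists (fun k => proj1_sig (constructive_indefinite_description _ (Ch k))).
    intro k. exact (proj2_sig (constructive_indefinite_description _ (Ch k))). }
  destruct Ch2 as [pq Hpq].
  set (p := fun k => fst (pq k)). set (q := fun k => snd (pq k)).
  assert (Dpq: forall k, D (p k) (q k)) by (intro k; apply Hpq).
  assert (Bq: forall k, hnorm (q k) <= K + 1) by (intro k; apply Hpq).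
  assert (Cp: hconv p y).
  { apply hconv_iff. intros eps E. pose proof (Hconv y) as Cy. rewrite hconv_iff in Cy.
    destruct (Cy (eps/2)) as [N1 H1]; [lra|]. destruct (inv_small (eps/2)) as [N2 H2]; [lra|].
    exists (max N1 N2). intros n Hn. pose proof (tri_sub (p n) (phi n y) y).
    specialize (H1 n ltac:(lia)). specialize (H2 n ltac:(lia)).
    destruct (Hpq n) as [_ [h _]]. change (fst (pq n)) with (p n) in h. lra. }
  set (a := fun k => hsub (q k) z). set (b := fun k => hsub (p k) y).
  assert (Ba: forall k, hnorm (a k) <= K + 1 + hnorm z).
  { intro k. unfold a, hsub. pose proof (tri (q k) (hopp z)). rewrite hnorm_opp in H0.
    specialize (Bq k). lra. }
  assert (Wa: forall h, Un_cv (fun k => re (hinner h (a k))) 0).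
  { apply (weak_ext D a _ Dd Ba). intros x [w Dxw] eps E.
    destruct (re_cont p (fun _ => w) y w Cp (hconv_const w) eps E) as [N HN].
    exists N. intros n Hn. specialize (HN n Hn). unfold R_dist in *.
    unfold a. rewrite re_subr, Rminus_0_r.
    rewrite (re_conj x (q n)), (Sy _ _ _ _ (Dpq n) Dxw), <- (Ayz x w Dxw), (re_conj w y). exact HN. }
  destruct (conv_bounded _ _ Cp) as [Bp HBp].
  assert (Bb: forall k, hnorm (b k) <= Bp + hnorm y).
  { intro k. unfold b, hsub. pose proof (tri (p k) (hopp y)). rewrite hnorm_opp in H0.
    specialize (HBp k). lra. }
  assert (Wb: forall h, Un_cv (fun k => re (hinner h (b k))) 0).
  { intros h eps E. pose proof Cp as Cp'. rewrite hconv_iff in Cp'.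
    destruct (Cp' (eps / (hnorm h + 1))) as [N HN]. { apply Rdiv_lt_0_compat; pose proof (hnorm_pos h); lra. }
    exists N. intros n Hn. specialize (HN n Hn). unfold R_dist. rewrite Rminus_0_r.
    pose proof (CS h (b n)). pose proof (hnorm_pos h). pose proof (hnorm_pos (b n)).
    unfold b in *.
    assert (hnorm (hsub (p n) y) * (hnorm h + 1) < eps).
    { apply Rmult_lt_compat_r with (r := hnorm h + 1) in HN; [|lra].
      replace (eps / (hnorm h + 1) * (hnorm h + 1)) with eps in HN by (field; lra). exact HN. }
    nra. }
  assert (Pk: forall Sv Tv : H, exists k, Rabs (re (hinner Sv (b k))) <= 1 /\ Rabs (re (hinner Tv (a k))) <= 1).
  { intros Sv Tv. destruct (Wb Sv 1) as [N1 H1]; [lra|]. destruct (Wa Tv 1) as [N2 H2]; [lra|].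
    exists (max N1 N2). specialize (H1 (max N1 N2) ltac:(lia)). specialize (H2 (max N1 N2) ltac:(lia)).
    unfold R_dist in *. rewrite Rminus_0_r in *. lra. }
  assert (Fp: {f : H -> H -> nat | forall Sv Tv, Rabs (re (hinner Sv (b (f Sv Tv)))) <= 1 /\ Rabs (re (hinner Tv (a (f Sv Tv)))) <= 1}).
  { exists (fun Sv Tv => proj1_sig (constructive_indefinite_description _ (Pk Sv Tv))).
    intros Sv Tv. exact (proj2_sig (constructive_indefinite_description _ (Pk Sv Tv))). }
  destruct Fp as [f Hf].
  set (Sf := fun (P : H) (n : nat) => hsub P (hscal (rc (INR n)) y)).
  set (Tf := fun (Q : H) (n : nat) => hsub Q (hscal (rc (INR n)) z)).
  set (st := fix st (n : nat) : H * H := match n with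
       | O => (hzero, hzero)
       | S n => let s := st n in let k := f (Sf (fst s) n) (Tf (snd s) n) in
                (hadd (fst s) (p k), hadd (snd s) (q k)) end).
  set (kk := fun n => f (Sf (fst (st n)) n) (Tf (snd (st n)) n)).
  assert (stS: forall n, st (S n) = (hadd (fst (st n)) (p (kk n)), hadd (snd (st n)) (q (kk n)))) by reflexivity.
  assert (DS: forall n, D (fst (st n)) (snd (st n))).
  { induction n. exact D0. rewrite stS. simpl. apply Dadd; auto. }
  assert (Rec: forall (P c yy : H) n, hsub (hadd P c) (hscal (rc (INR (S n))) yy) = hadd (hsub P (hscal (rc (INR n)) yy)) (hsub c yy)).
  { intros. rewrite S_INR, hscal_rc_add, hscal_rc1. apply hsub_add. }
  assert (Z0: forall yy : H, hsub hzero (hscal (rc (INR 0)) yy) = hzero).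
  { intro yy. simpl. change (rc 0) with C0. rewrite hscal_0. apply hsub_diag. }
  assert (BS: forall n, nsq (Sf (fst (st n)) n) <= INR n * ((Bp + hnorm y) * (Bp + hnorm y) + 2)).
  { apply (avg_bound (fun n => b (kk n))).
    - apply Z0.
    - intro n. unfold Sf. rewrite stS. simpl. apply Rec.
    - intro n. apply Bb.
    - intro n. apply Hf. }
  assert (BT: forall n, nsq (Tf (snd (st n)) n) <= INR n * ((K + 1 + hnorm z) * (K + 1 + hnorm z) + 2)).
  { apply (avg_bound (fun n => a (kk n))).
    - apply Z0.
    - intro n. unfold Tf. rewrite stS. simpl. apply Rec.
    - intro n. apply Ba.
    - intro n. apply Hf. }
  exists (fun n => hscal (rc (/ INR (S n))) (fst (st (S n)))),
         (fun n => hscal (rc (/ INR (S n))) (snd (st (S n)))).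
  split; [intro n; apply Dsc, DS|]. split.
  - eapply (avg_conv (fun n => fst (st n)) y); [|exact BS]. pose proof (Rle_0_sqr (Bp + hnorm y)) as Q; unfold Rsqr in Q; lra.
  - eapply (avg_conv (fun n => snd (st n)) z); [|exact BT]. pose proof (Rle_0_sqr (K + 1 + hnorm z)) as Q; unfold Rsqr in Q; lra.
Qed.

End Main.

Theorem mainTheorem2 (H : HilbertSpace) (D : @graph H) :
  symmetric_op D ->
  (exists phi : nat -> H -> H, adequate_approx_identity D phi) ->
  essentially_self_adjoint D.
Proof.
  intros Sd [phi Ad]. unfold essentially_self_adjoint, self_adjoint.
  split; [apply closure_op; exact Sd|].
  split; [apply closure_dense; apply Sd|].
  intros y z; split.
  - intros Cl x w Cxw. apply (adj_closure D y z x w); [|exact Cxw].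
    apply closure_adj; assumption.
  - intro A. apply (main_incl D phi); auto.
    intros x w Dxw. apply A. apply closure_incl; exact Dxw.
Qed.
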